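(* Let $n_1,n_2,n_3\ge 1$, $n=n_1+n_2+n_3$, and let $I_1=\{1,\dots,n_1\}$, $I_2=\{n_1+1,\dots,n_1+n_2\}$, $I_3=\{n_1+n_2+1,\dots,n\}$. Consider $G/H=\mathrm{SO}(n)/\mathrm{SO}(n_1)\cdot\mathrm{SO}(n_2)\cdot\mathrm{SO}(n_3)$ (block-diagonal embedding) with $\mathfrak m=\mathfrak m_{12}\oplus\mathfrak m_{13}\oplus\mathfrak m_{23}$, where $\mathfrak m_{ij}=\mathrm{span}\{\xi_{ab}: a\in I_i,\ b\in I_j\}$. Let $X=X_{\mathfrak m_{12}}+X_{\mathfrak m_{13}}+X_{\mathfrak m_{23}}\in\mathfrak m$ with $X_{\mathfrak m_{ij}}\in\mathfrak m_{ij}$. Then $X$ is an equigeodesic vector (with respect to the family of metrics $\Lambda=\lambda_{12}\mathrm{Id}_{\mathfrak m_{12}}+\lambda_{13}\mathrm{Id}_{\mathfrak m_{13}}+\lambda_{23}\mathrm{Id}_{\mathfrak m_{23}}$, $\lambda_{ij}>0$) if and only if $$[X_{\mathfrak m_{12}},X_{\mathfrak m_{13}}]_{\mathfrak m}=0,\quad [X_{\mathfrak m_{12}},X_{\mathfrak m_{23}}]_{\mathfrak m}=0,\quad [X_{\mathfrak m_{13}},X_{\mathfrak m_{23}}]_{\mathfrak m}=0.$$ Equivalently, writing $X=\sum a_{kl}\xi_{kl}$ (sum over pairs $k<l$ lying in different blocks) and forming the real matrices $A=(a_{ij})_{i\in I_1,j\in I_2}$, $C=(a_{ik})_{i\in I_1,k\in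 I_3}$, $D=(a_{jk})_{j\in I_2,k\in I_3}$, $X$ is equigeodesic if and only if $A^{t}C=0$, $AD=0$ and $CD^{t}=0$.
   Context: $E_{ab}$ denotes the $n\times n$ matrix with $1$ in entry $(a,b)$ and $0$ elsewhere, and $\xi_{ab}=E_{ab}-E_{ba}\in\mathfrak{so}(n)$. $\mathfrak m$ is the orthogonal complement of $\mathfrak h=\mathfrak{so}(n_1)\oplus\mathfrak{so}(n_2)\oplus\mathfrak{so}(n_3)$ in $\mathfrak{so}(n)$ with respect to $B(X,Y)=-\mathrm{tr}(XY)$, and $[\cdot,\cdot]_{\mathfrak m}$ denotes the $\mathfrak m$-component of the Lie bracket. Given a family of $B$-symmetric positive operators $\Lambda:\mathfrak m\to\mathfrak m$ (invariant metrics), a nonzero $X\in\mathfrak m$ is called an equigeodesic vector if $[X,\Lambda X]_{\mathfrak m}=0$ for every $\Lambda$ in the family (equivalently, $t\mapsto \exp(tX)\cdot eH$ is a geodesic for every such metric). *)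

(* Defs.v *)
From HB Require Import structures.
From mathcomp Require Import all_boot all_order all_algebra.
From mathcomp Require Import reals.
Set Implicit Arguments. Unset Strict Implicit. Unset Printing Implicit Defensive.
Import Order.TTheory GRing.Theory Num.Theory.
Local Open Scope ring_scope.

Section Defs.
Variables (R : realType) (n1 n2 n3 : nat).
Notation N := (n1 + n2 + n3)%N.

(* block of an index: I_1 = [0,n1), I_2 = [n1,n1+n2), I_3 = [n1+n2,n) (0-based) *)
Definition blk (a : 'I_N) : nat :=
  if (a < n1)%N then 1%N else if (a < n1 + n2)%N then 2%N else 3%N.

Definition skew (X : 'M[R]_N) : Prop := X^T = - X.

Definition in_h (Y : 'M[R]_N) : Prop :=
  skew Y /\ forall a b : 'I_N, blk a != blk b -> Y a b = 0.

Definition Bform (X Y : 'M[R]_N) : R := - \tr (X *m Y).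

Definition in_m (X : 'M[R]_N) : Prop :=
  skew X /\ forall Y, in_h Y -> Bform X Y = 0.

(* m_ij = span{ xi_ab : a in I_i, b in I_j } : skew matrices supported on
   (I_i x I_j) u (I_j x I_i) *)
Definition in_mij (i j : nat) (X : 'M[R]_N) : Prop :=
  skew X /\ forall a b : 'I_N,
    ~~ (((blk a == i) && (blk b == j)) || ((blk a == j) && (blk b == i))) ->
    X a b = 0.

(* the m_ij-component of a matrix (B-orthogonal projection onto m_ij) *)
Definition comp (i j : nat) (X : 'M[R]_N) : 'M[R]_N :=
  \matrix_(a, b)
    if ((blk a == i) && (blk b == j)) || ((blk a == j) && (blk b == i))
    then X a b else 0.

(* the m-component of a matrix of so(n) (B-orthogonal projection onto m) *)
Definition proj_m (X : 'M[R]_N) : 'M[R]_N :=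
  \matrix_(a, b) if blk a == blk b then 0 else X a b.

Definition brack_m (X Y : 'M[R]_N) : 'M[R]_N := proj_m (X *m Y - Y *m X).

Definition Lam (l12 l13 l23 : R) (X : 'M[R]_N) : 'M[R]_N :=
  l12 *: comp 1 2 X + l13 *: comp 1 3 X + l23 *: comp 2 3 X.

Definition equigeodesic (X : 'M[R]_N) : Prop :=
  in_m X /\ X != 0 /\
  forall l12 l13 l23 : R, 0 < l12 -> 0 < l13 -> 0 < l23 ->
    brack_m X (Lam l12 l13 l23 X) = 0.

Definition i1 (i : 'I_n1) : 'I_N := lshift n3 (lshift n2 i).
Definition i2 (j : 'I_n2) : 'I_N := lshift n3 (rshift n1 j).
Definition i3 (k : 'I_n3) : 'I_N := rshift (n1 + n2) k.

(* X = sum_{k<l} a_kl xi_kl, so a_kl = X k l *)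
Definition matA (X : 'M[R]_N) : 'M[R]_(n1, n2) := \matrix_(i, j) X (i1 i) (i2 j).
Definition matC (X : 'M[R]_N) : 'M[R]_(n1, n3) := \matrix_(i, k) X (i1 i) (i3 k).
Definition matD (X : 'M[R]_N) : 'M[R]_(n2, n3) := \matrix_(j, k) X (i2 j) (i3 k).

End Defs.

(* Main.v *)
Require Import Defs.
From HB Require Import structures.
From mathcomp Require Import all_boot all_order all_algebra.
From mathcomp Require Import reals ring lra.
Import Order.TTheory GRing.Theory Num.Theory.
Local Open Scope ring_scope.

Section Aux.
Variables (R : realType) (n1 n2 n3 : nat).
Notation N := (n1 + n2 + n3)%N.
Notation I1 := (@i1 n1 n2 n3).
Notation I2 := (@i2 n1 n2 n3).
Notation I3 := (@i3 n1 n2 n3).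
Implicit Types (P Q M : 'M[R]_N).

Lemma blk_i1 i : blk (I1 i) = 1%N.
Proof. by rewrite /blk /= ltn_ord. Qed.
Lemma blk_i2 j : blk (I2 j) = 2%N.
Proof. by rewrite /blk /= ltnNge leq_addr /= ltn_add2l ltn_ord. Qed.
Lemma blk_i3 k : blk (I3 k) = 3%N.
Proof. by rewrite /blk /= ltnNge -addnA leq_addr /= ltn_add2l ltnNge leq_addr. Qed.

Lemma idx3 (Pr : 'I_N -> Prop) :
  (forall i, Pr (I1 i)) -> (forall j, Pr (I2 j)) -> (forall k, Pr (I3 k)) ->
  forall a, Pr a.
Proof.
move=> H1 H2 H3 a; rewrite -(splitK a); case: (split a) => [b|k] /=; last exact: H3.
rewrite -(splitK b); case: (split b) => [i|j] /=; [exact: H1 | exact: H2].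
Qed.

Lemma sum3 (F : 'I_N -> R) :
  \sum_a F a = \sum_i F (I1 i) + \sum_j F (I2 j) + \sum_k F (I3 k).
Proof. by rewrite big_split_ord big_split_ord. Qed.

Lemma skewE P (a b : 'I_N) : Defs.skew P -> P a b = - P b a.
Proof. by move=> hP; have := congr1 (fun M => M b a) hP; rewrite !mxE /= => ->. Qed.

Lemma in_mij_sym p q P : in_mij p q P -> in_mij q p P.
Proof. by case=> hs hP; split=> // a b h; apply: hP; rewrite orbC. Qed.

Arguments in_mij_sym {p q P}.

Lemma mul_supp p q r P Q (a b : 'I_N) : in_mij p q P -> in_mij q r Q ->
  p != q -> q != r -> p != r -> ~~((blk a == p) && (blk b == r)) -> (P *m Q) a b = 0.
Proof.
move=> [_ hP] [_ hQ] pq qr pr hab; rewrite mxE; apply: big1 => k _.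
case: (boolP ((blk a == p) && (blk k == q) || (blk a == q) && (blk k == p))) => cP;
  last by rewrite hP // mul0r.
case: (boolP ((blk k == q) && (blk b == r) || (blk k == r) && (blk b == q))) => cQ;
  last by rewrite hQ // mulr0.
exfalso; move: cP cQ hab pq qr pr; move: (blk a) (blk k) (blk b) => x y z.
case/orP=> /andP[/eqP ? /eqP ?]; case/orP=> /andP[/eqP ? /eqP ?];
  move=> h1 h2 h3 h4; subst; by rewrite ?eqxx in h1 h2 h3 h4.
Qed.

Arguments mul_supp {p q r P Q a b}.

Lemma mxDE (A B : 'M[R]_N) (a b : 'I_N) : (A + B) a b = A a b + B a b.
Proof. by rewrite mxE. Qed.
Lemma mxBE (A B : 'M[R]_N) (a b : 'I_N) : (A - B) a b = A a b - B a b.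
Proof. by rewrite !mxE. Qed.
Lemma mxNE (A : 'M[R]_N) (a b : 'I_N) : (- A) a b = - A a b.
Proof. by rewrite mxE. Qed.
Lemma mxZE (c : R) (A : 'M[R]_N) (a b : 'I_N) : (c *: A) a b = c * A a b.
Proof. by rewrite mxE. Qed.
Lemma projmE M (a b : 'I_N) : proj_m M a b = if blk a == blk b then 0 else M a b.
Proof. by rewrite mxE. Qed.

Lemma brack_supp p q r P Q (a b : 'I_N) : in_mij p q P -> in_mij q r Q ->
  p != q -> q != r -> p != r ->
  ~~((blk a == p) && (blk b == r)) -> ~~((blk a == r) && (blk b == p)) ->
  brack_m P Q a b = 0.
Proof.
move=> hP hQ pq qr pr h1 h2; rewrite /brack_m projmE; case: ifP => // _.
rewrite mxBE (mul_supp hP hQ) // (mul_supp (in_mij_sym hQ) (in_mij_sym hP)) ?subrr //;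
  by rewrite eq_sym.
Qed.

Arguments brack_supp {p q r P Q a b}.

Lemma mulT P Q (a b : 'I_N) : Defs.skew P -> Defs.skew Q -> (P *m Q) b a = (Q *m P) a b.
Proof.
move=> hP hQ; have -> : (P *m Q) b a = ((P *m Q)^T) a b by rewrite [RHS]mxE.
by rewrite trmx_mul hP hQ mulmxN mulNmx opprK.
Qed.

Lemma brack_skew P Q (a b : 'I_N) : Defs.skew P -> Defs.skew Q ->
  brack_m P Q b a = - brack_m P Q a b.
Proof.
move=> hP hQ; rewrite /brack_m !projmE eq_sym; case: (blk a == blk b); first by rewrite oppr0.
by rewrite !mxBE (mulT P Q a b) // (mulT Q P a b) // opprB.
Qed.

Lemma bil P1 P2 P3 (l1 l2 l3 : R) :
  brack_m (P1 + P2 + P3) (l1 *: P1 + l2 *: P2 + l3 *: P3) =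
  (l2 - l1) *: brack_m P1 P2 + (l3 - l1) *: brack_m P1 P3 + (l3 - l2) *: brack_m P2 P3.
Proof.

rewrite /brack_m !mulmxDl !mulmxDr -!scalemxAl -!scalemxAr.
move: (P1 *m P1) (P1 *m P2) (P1 *m P3) (P2 *m P1) (P2 *m P2) (P2 *m P3)
  (P3 *m P1) (P3 *m P2) (P3 *m P3) => M11 M12 M13 M21 M22 M23 M31 M32 M33.
apply/matrixP => a b; rewrite !(projmE, mxDE, mxBE, mxNE, mxZE); case: (blk a == blk b); ring.
Qed.

Lemma V1 P Q j k : in_mij 1 2 P -> in_mij 1 3 Q ->
  brack_m P Q (I2 j) (I3 k) = - ((matA P)^T *m matC Q) j k.
Proof.
move=> hP hQ; rewrite /brack_m projmE blk_i2 blk_i3 /= mxBE.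
rewrite (mul_supp (in_mij_sym hQ) hP) ?blk_i2 // subr0 [LHS]mxE sum3.
have z2 : \sum_(j' < n2) P (I2 j) (I2 j') * Q (I2 j') (I3 k) = 0.
  apply: big1 => j' _; rewrite (proj2 hP (I2 j) (I2 j')) ?mul0r //; by rewrite !blk_i2.
have z3 : \sum_(k' < n3) P (I2 j) (I3 k') * Q (I3 k') (I3 k) = 0.
  apply: big1 => k' _; rewrite (proj2 hP (I2 j) (I3 k')) ?mul0r //; by rewrite blk_i2 blk_i3.
rewrite z2 z3 !addr0 mxE -sumrN; apply: eq_bigr => i _.
by rewrite !mxE (skewE P (I2 j) (I1 i) (proj1 hP)) mulNr.
Qed.

Lemma V2 P Q i k : in_mij 1 2 P -> in_mij 2 3 Q ->
  brack_m P Q (I1 i) (I3 k) = (matA P *m matD Q) i k.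
Proof.
move=> hP hQ; rewrite /brack_m projmE blk_i1 blk_i3 /= mxBE.
rewrite (mul_supp (in_mij_sym hQ) (in_mij_sym hP)) ?blk_i1 // subr0 [LHS]mxE sum3.
have z1 : \sum_(i' < n1) P (I1 i) (I1 i') * Q (I1 i') (I3 k) = 0.
  apply: big1 => i' _; rewrite (proj2 hP (I1 i) (I1 i')) ?mul0r //; by rewrite !blk_i1.
have z3 : \sum_(k' < n3) P (I1 i) (I3 k') * Q (I3 k') (I3 k) = 0.
  apply: big1 => k' _; rewrite (proj2 hP (I1 i) (I3 k')) ?mul0r //; by rewrite blk_i1 blk_i3.
rewrite z1 z3 add0r addr0 mxE; apply: eq_bigr => j _.
by rewrite !mxE.
Qed.

Lemma V3 P Q i j : in_mij 1 3 P -> in_mij 2 3 Q ->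
  brack_m P Q (I1 i) (I2 j) = - (matC P *m (matD Q)^T) i j.
Proof.
move=> hP hQ; rewrite /brack_m projmE blk_i1 blk_i2 /= mxBE.
rewrite (mul_supp hQ (in_mij_sym hP)) ?blk_i1 // subr0 [LHS]mxE sum3.
have z1 : \sum_(i' < n1) P (I1 i) (I1 i') * Q (I1 i') (I2 j) = 0.
  apply: big1 => i' _; rewrite (proj2 hP (I1 i) (I1 i')) ?mul0r //; by rewrite !blk_i1.
have z2 : \sum_(j' < n2) P (I1 i) (I2 j') * Q (I2 j') (I2 j) = 0.
  apply: big1 => j' _; rewrite (proj2 hP (I1 i) (I2 j')) ?mul0r //; by rewrite blk_i1 blk_i2.
rewrite z1 z2 !add0r mxE -sumrN; apply: eq_bigr => k _.
by rewrite !mxE (skewE Q (I3 k) (I2 j) (proj1 hQ)) mulrN.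
Qed.

Lemma L1 P Q : in_mij 1 2 P -> in_mij 1 3 Q ->
  brack_m P Q = 0 <-> (matA P)^T *m matC Q = 0.
Proof.
move=> hP hQ; split=> h.
  apply/matrixP => j k; rewrite [RHS]mxE; apply/eqP; rewrite -oppr_eq0 -(V1 P Q j k hP hQ) h mxE //.
apply/matrixP => a b; rewrite [RHS]mxE; move: a b.
apply: idx3 => [i|j|k]; apply: idx3 => [i'|j'|k'].
all: try (rewrite (brack_supp (in_mij_sym hP) hQ) //; rewrite ?blk_i1 ?blk_i2 ?blk_i3 //=; fail).
all: try (rewrite V1 // h mxE ?oppr0; reflexivity).
all: rewrite brack_skew; [rewrite V1 // h mxE ?oppr0; reflexivity | exact: proj1 hP | exact: proj1 hQ].
Qed.

Lemma L2 P Q : in_mij 1 2 P -> in_mij 2 3 Q ->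
  brack_m P Q = 0 <-> matA P *m matD Q = 0.
Proof.
move=> hP hQ; split=> h.
  apply/matrixP => i k; rewrite [RHS]mxE -(V2 P Q i k hP hQ) h mxE //.
apply/matrixP => a b; rewrite [RHS]mxE; move: a b.
apply: idx3 => [i|j|k]; apply: idx3 => [i'|j'|k'].
all: try (rewrite (brack_supp hP hQ) //; rewrite ?blk_i1 ?blk_i2 ?blk_i3 //=; fail).
all: try (rewrite V2 // h mxE ?oppr0; reflexivity).
all: rewrite brack_skew; [rewrite V2 // h mxE ?oppr0; reflexivity | exact: proj1 hP | exact: proj1 hQ].
Qed.

Lemma L3 P Q : in_mij 1 3 P -> in_mij 2 3 Q ->
  brack_m P Q = 0 <-> matC P *m (matD Q)^T = 0.
Proof.
move=> hP hQ; split=> h.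
  apply/matrixP => i j; rewrite [RHS]mxE; apply/eqP; rewrite -oppr_eq0 -(V3 P Q i j hP hQ) h mxE //.
apply/matrixP => a b; rewrite [RHS]mxE; move: a b.
apply: idx3 => [i|j|k]; apply: idx3 => [i'|j'|k'].
all: try (rewrite (brack_supp hP (in_mij_sym hQ)) //; rewrite ?blk_i1 ?blk_i2 ?blk_i3 //=; fail).
all: try (rewrite V3 // h mxE ?oppr0; reflexivity).
all: rewrite brack_skew; [rewrite V3 // h mxE ?oppr0; reflexivity | exact: proj1 hP | exact: proj1 hQ].
Qed.

Definition cnd p q (a b : 'I_N) :=
  ((blk a == p) && (blk b == q)) || ((blk a == q) && (blk b == p)).

Lemma supE p q P (a b : 'I_N) : in_mij p q P -> P a b = if cnd p q a b then P a b else 0.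
Proof. by case=> _ h; rewrite /cnd; case: ifP => // /negbT /h ->. Qed.

Lemma blk3 (a : 'I_N) : blk a = 1%N \/ blk a = 2%N \/ blk a = 3%N.
Proof. by rewrite /blk; case: ifP; [left|case: ifP; right; [left|right]]. Qed.

Lemma mx0E m n (a : 'I_m) (b : 'I_n) : (0 : 'M[R]_(m, n)) a b = 0.
Proof. by rewrite mxE. Qed.

Lemma comp_sum (X12 X13 X23 : 'M[R]_N) : in_mij 1 2 X12 -> in_mij 1 3 X13 -> in_mij 2 3 X23 ->
  [/\ Defs.comp 1 2 (X12 + X13 + X23) = X12, Defs.comp 1 3 (X12 + X13 + X23) = X13
    & Defs.comp 2 3 (X12 + X13 + X23) = X23].
Proof.
move=> h12 h13 h23; split; apply/matrixP => a b; rewrite mxE !mxDE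
  (supE _ _ _ a b h12) (supE _ _ _ a b h13) (supE _ _ _ a b h23) /cnd;
  case: (blk3 a) => [->|[->|->]]; case: (blk3 b) => [->|[->|->]] /=;
  by rewrite ?addr0 ?add0r.
Qed.

Lemma in_m_sum (X12 X13 X23 : 'M[R]_N) : in_mij 1 2 X12 -> in_mij 1 3 X13 -> in_mij 2 3 X23 ->
  in_m (X12 + X13 + X23).
Proof.
move=> h12 h13 h23; split.
  by rewrite /Defs.skew !raddfD /= (proj1 h12) (proj1 h13) (proj1 h23) ?opprD.
move=> Y [_ hY]; rewrite /Bform; apply/eqP; rewrite oppr_eq0; apply/eqP.
apply: big1 => a _; rewrite mxE; apply: big1 => b _.
case: (eqVneq (blk b) (blk a)) => e; last by rewrite hY ?mulr0.
rewrite !mxDE (supE _ _ _ a b h12) (supE _ _ _ a b h13) (supE _ _ _ a b h23) /cnd e.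
by case: (blk3 a) => [->|[->|->]] /=; rewrite !addr0 mul0r.
Qed.

Lemma matA_sum (X12 X13 X23 : 'M[R]_N) : in_mij 1 3 X13 -> in_mij 2 3 X23 ->
  matA (X12 + X13 + X23) = matA X12.
Proof.
move=> h13 h23; apply/matrixP => i j; rewrite !mxE ?mxDE
  (supE _ _ _ _ _ h13) (supE _ _ _ _ _ h23) /cnd !blk_i1 !blk_i2 /=.
by rewrite !addr0.
Qed.

Lemma matC_sum (X12 X13 X23 : 'M[R]_N) : in_mij 1 2 X12 -> in_mij 2 3 X23 ->
  matC (X12 + X13 + X23) = matC X13.
Proof.
move=> h12 h23; apply/matrixP => i j; rewrite !mxE ?mxDE
  (supE _ _ _ _ _ h12) (supE _ _ _ _ _ h23) /cnd !blk_i1 !blk_i3 /=.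
by rewrite addr0 add0r.
Qed.

Lemma matD_sum (X12 X13 X23 : 'M[R]_N) : in_mij 1 2 X12 -> in_mij 1 3 X13 ->
  matD (X12 + X13 + X23) = matD X23.
Proof.
move=> h12 h13; apply/matrixP => i j; rewrite !mxE ?mxDE
  (supE _ _ _ _ _ h12) (supE _ _ _ _ _ h13) /cnd !blk_i2 !blk_i3 /=.
by rewrite !add0r.
Qed.

End Aux.

Arguments comp_sum {R n1 n2 n3 X12 X13 X23}.
Arguments in_m_sum {R n1 n2 n3 X12 X13 X23}.
Arguments L1 {R n1 n2 n3} P Q.
Arguments L2 {R n1 n2 n3} P Q.
Arguments L3 {R n1 n2 n3} P Q.
Arguments brack_supp {R n1 n2 n3 p q r P Q a b}.
Arguments in_mij_sym {R n1 n2 n3 p q P}.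
Arguments matA_sum {R n1 n2 n3} X12 {X13 X23}.
Arguments matC_sum {R n1 n2 n3} X12 {X13 X23}.
Arguments matD_sum {R n1 n2 n3} X12 {X13 X23}.

Theorem proposition4p1 (R : realType) (n1 n2 n3 : nat)
  (h1 : (0 < n1)%N) (h2 : (0 < n2)%N) (h3 : (0 < n3)%N)
  (X12 X13 X23 : 'M[R]_(n1 + n2 + n3))
  (hX12 : in_mij 1 2 X12) (hX13 : in_mij 1 3 X13)
  (hX23 : in_mij 2 3 X23)
  (hX0 : X12 + X13 + X23 != 0) :
  let X := X12 + X13 + X23 in
  (equigeodesic X <->
     [/\ brack_m X12 X13 = 0, brack_m X12 X23 = 0 & brack_m X13 X23 = 0])
  /\
  (equigeodesic X <->
     [/\ (matA X)^T *m matC X = 0, matA X *m matD X = 0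
       & matC X *m (matD X)^T = 0]).
Proof.
move=> X.
have [c12 c13 c23] := comp_sum hX12 hX13 hX23.
have hm := in_m_sum hX12 hX13 hX23.
have LamE : forall l1 l2 l3, Lam l1 l2 l3 X = l1 *: X12 + l2 *: X13 + l3 *: X23.
  by move=> l1 l2 l3; rewrite /Lam /X c12 c13 c23.
have E : equigeodesic X <->
     [/\ brack_m X12 X13 = 0, brack_m X12 X23 = 0 & brack_m X13 X23 = 0].
  split; last first.
    case=> b1 b2 b3; split=> //; split=> // l1 l2 l3 _ _ _.
    by rewrite LamE /X bil b1 b2 b3 !scaler0 !addr0.
  case=> _ [_ hl].
  have HB : forall l1 l2 l3 (a b : 'I_(n1 + n2 + n3)), 0 < l1 -> 0 < l2 -> 0 < l3 ->
     (l2 - l1) * brack_m X12 X13 a b + (l3 - l1) * brack_m X12 X23 a b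
       + (l3 - l2) * brack_m X13 X23 a b = 0.
    move=> l1 l2 l3 a b p1 p2 p3.
    have := congr1 (fun M : 'M[R]_(n1 + n2 + n3) => M a b) (hl l1 l2 l3 p1 p2 p3).
    by rewrite /= LamE /X bil !mxDE !mxZE mx0E.
  have p1 : (0 : R) < 1 by lra.
  have p2 : (0 : R) < 2 by lra.
  split.
  - apply/(L1 _ _ hX12 hX13)/matrixP => j k; rewrite mx0E.
    have := HB 1 2 1 (i2 n1 n3 j) (i3 n1 n2 k) p1 p2 p1.
    have z2 : brack_m X12 X23 (i2 n1 n3 j) (i3 n1 n2 k) = 0.
      rewrite (brack_supp hX12 hX23) //; rewrite ?blk_i1 ?blk_i2 ?blk_i3 //=.
    have z3 : brack_m X13 X23 (i2 n1 n3 j) (i3 n1 n2 k) = 0.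
      rewrite (brack_supp hX13 (in_mij_sym hX23)) //; rewrite ?blk_i1 ?blk_i2 ?blk_i3 //=.
    rewrite z2 z3 V1 //; lra.
  - apply/(L2 _ _ hX12 hX23)/matrixP => i k; rewrite mx0E.
    have := HB 1 1 2 (i1 n2 n3 i) (i3 n1 n2 k) p1 p1 p2.
    have z1 : brack_m X12 X13 (i1 n2 n3 i) (i3 n1 n2 k) = 0.
      rewrite (brack_supp (in_mij_sym hX12) hX13) //; rewrite ?blk_i1 ?blk_i2 ?blk_i3 //=.
    have z3 : brack_m X13 X23 (i1 n2 n3 i) (i3 n1 n2 k) = 0.
      rewrite (brack_supp hX13 (in_mij_sym hX23)) //; rewrite ?blk_i1 ?blk_i2 ?blk_i3 //=.
    rewrite z1 z3 V2 //; lra.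
  - apply/(L3 _ _ hX13 hX23)/matrixP => i j; rewrite mx0E.
    have := HB 1 1 2 (i1 n2 n3 i) (i2 n1 n3 j) p1 p1 p2.
    have z1 : brack_m X12 X13 (i1 n2 n3 i) (i2 n1 n3 j) = 0.
      rewrite (brack_supp (in_mij_sym hX12) hX13) //; rewrite ?blk_i1 ?blk_i2 ?blk_i3 //=.
    have z2 : brack_m X12 X23 (i1 n2 n3 i) (i2 n1 n3 j) = 0.
      rewrite (brack_supp hX12 hX23) //; rewrite ?blk_i1 ?blk_i2 ?blk_i3 //=.
    rewrite z1 z2 V3 //; lra.
split=> //.
rewrite E /X (matA_sum _ hX13 hX23) (matC_sum _ hX12 hX23) (matD_sum _ hX12 hX13).
split=> -[b1 b2 b3]; split.
- exact/(L1 _ _ hX12 hX13).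
- exact/(L2 _ _ hX12 hX23).
- exact/(L3 _ _ hX13 hX23).
- exact/(L1 _ _ hX12 hX13).
- exact/(L2 _ _ hX12 hX23).
- exact/(L3 _ _ hX13 hX23).
Qed.
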